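(* Let $\mathcal A$ be an abelian category and let $0\to F\xrightarrow{i} M\xrightarrow{d} C\to 0$ be a fully invariant short exact sequence in $\mathcal A$. (1) The following are equivalent: (i) $M$ is (strongly) self-$F$-split and, for every morphism $g:M\to M$ with pullback square $P\xrightarrow{j}M$, $P\xrightarrow{f}F$ of $i$ along $g$ (so $gj=if$), the unique morphism $l:\mathrm{Ker}(g)\to P$ with $jl=\ker(g)$ is a (fully invariant) section; (ii) $M$ is (strongly) self-Rickart and $M\cong F\oplus C$. (2) The following are equivalent: (i) $M$ is dual (strongly) self-$F$-split and, for every morphism $g:M\to M$ with pushout square $M\xrightarrow{p}Q$, $C\xrightarrow{h}Q$ of $d$ along $g$ (so $pg=hd$), the unique morphism $q:Q\to \mathrm{Coker}(g)$ with $qp=\mathrm{coker}(g)$ is a (fully coinvariant) retraction; (ii) $M$ is dual (strongly) self-Rickart and $M\cong F\oplus C$.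
   Context: Convention: each statement containing parenthetical words holds in two versions: one obtained by deleting all parenthetical words and one obtained by keeping all of them. Let $\mathcal A$ be an abelian category. A morphism $s:X\to Y$ is a section if $ts=1_X$ for some $t$, and a retraction if $st=1_Y$ for some $t$. A monomorphism $i:K\to M$ is fully invariant if for every morphism $h:M\to M$ there is $\alpha:K\to K$ with $hi=i\alpha$; an epimorphism $d:M\to C$ is fully coinvariant if for every $h:M\to M$ there is $\beta:C\to C$ with $dh=\beta d$. A short exact sequence $0\to F\xrightarrow{i}M\xrightarrow{d}C\to 0$ is fully invariant if $i$ is fully invariant. $M$ is (strongly) self-$F$-split if for every morphism $g:M\to M$, the morphism $j:P\to M$ in the pullback of $i$ along $g$ (equivalently $\ker(dg)$) is a (fully invariant) section; $M$ is dual (strongly) self-$F$-split if for every $g:M\to M$, the morphism $p:M\to Q$ in the pushout of $d$ along $g$ (equivalently $\mathrm{coker}(gi)$) is a (fully coinvariant) retraction. $M$ is (strongly) self-Rickart if for every $f:M\to M$, $\ker(f)$ is a (fully invariant) section, and dual (strongly) self-Rickart if for every $f:M\to M$, $\mathrm{coker}(f)$ is a (fully coinvariant) retraction. *)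

(* Defs.v *)
From HB Require Import structures.
From mathcomp Require Import all_boot all_algebra.
Set Implicit Arguments. Unset Strict Implicit. Unset Printing Implicit Defensive.
Import GRing.Theory.
Local Open Scope ring_scope.

Record preadditive := {
  Obj : Type;
  Mor : Obj -> Obj -> zmodType;
  cmp : forall X Y Z : Obj, Mor Y Z -> Mor X Y -> Mor X Z;
  idm : forall X : Obj, Mor X X;
  comp_assoc : forall X Y Z W (h : Mor Z W) (g : Mor Y Z) (f : Mor X Y),
      cmp h (cmp g f) = cmp (cmp h g) f;
  comp_idl : forall X Y (f : Mor X Y), cmp (idm Y) f = f;
  comp_idr : forall X Y (f : Mor X Y), cmp f (idm X) = f;
  comp_addl : forall X Y Z (g g' : Mor Y Z) (f : Mor X Y),
      cmp (g + g') f = cmp g f + cmp g' f;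
  comp_addr : forall X Y Z (g : Mor Y Z) (f f' : Mor X Y),
      cmp g (f + f') = cmp g f + cmp g f'
}.

Arguments Mor {p}.
Arguments cmp {p X Y Z}.
Arguments idm {p}.

Section Defs.
Variable A : preadditive.
Local Notation "g \oc f" := (cmp g f) (at level 40, left associativity).

Definition monic (X Y : Obj A) (m : Mor X Y) :=
  forall Z (x y : Mor Z X), m \oc x = m \oc y -> x = y.
Definition epic (X Y : Obj A) (e : Mor X Y) :=
  forall Z (x y : Mor Y Z), x \oc e = y \oc e -> x = y.

Definition is_section (X Y : Obj A) (s : Mor X Y) :=
  exists t : Mor Y X, t \oc s = idm X.
Definition is_retraction (X Y : Obj A) (s : Mor X Y) :=
  exists t : Mor Y X, s \oc t = idm Y.

Definition is_iso (X Y : Obj A) (u : Mor X Y) :=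
  exists v : Mor Y X, v \oc u = idm X /\ u \oc v = idm Y.
Definition isomorphic (X Y : Obj A) := exists u : Mor X Y, is_iso u.

Definition fully_invariant (K M : Obj A) (i : Mor K M) :=
  monic i /\ forall h : Mor M M, exists alpha : Mor K K, h \oc i = i \oc alpha.
Definition fully_coinvariant (M C : Obj A) (d : Mor M C) :=
  epic d /\ forall h : Mor M M, exists beta : Mor C C, d \oc h = beta \oc d.

(* "(fully invariant) section" / "(fully coinvariant) retraction":
   strong = false deletes the parenthetical words, strong = true keeps them *)
Definition section_s (strong : bool) (X Y : Obj A) (s : Mor X Y) :=
  is_section s /\ (strong -> fully_invariant s).
Definition retraction_s (strong : bool) (X Y : Obj A) (s : Mor X Y) :=
  is_retraction s /\ (strong -> fully_coinvariant s).

Definition is_kernel (X Y : Obj A) (f : Mor X Y) (K : Obj A) (k : Mor K X) :=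
  f \oc k = 0 /\
  forall Z (x : Mor Z X), f \oc x = 0 -> exists! y : Mor Z K, k \oc y = x.
Definition is_cokernel (X Y : Obj A) (f : Mor X Y) (C : Obj A) (c : Mor Y C) :=
  c \oc f = 0 /\
  forall Z (x : Mor Y Z), x \oc f = 0 -> exists! y : Mor C Z, y \oc c = x.

Definition is_pullback (F N M : Obj A) (i : Mor F M) (g : Mor N M)
    (P : Obj A) (j : Mor P N) (f : Mor P F) :=
  g \oc j = i \oc f /\
  forall Z (x : Mor Z N) (y : Mor Z F), g \oc x = i \oc y ->
    exists! u : Mor Z P, j \oc u = x /\ f \oc u = y.
Definition is_pushout (M C N : Obj A) (d : Mor M C) (g : Mor M N)
    (Q : Obj A) (p : Mor N Q) (h : Mor C Q) :=
  p \oc g = h \oc d /\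
  forall Z (x : Mor N Z) (y : Mor C Z), x \oc g = y \oc d ->
    exists! u : Mor Q Z, u \oc p = x /\ u \oc h = y.

Definition is_biproduct (X Y B : Obj A) (p1 : Mor B X) (p2 : Mor B Y)
    (i1 : Mor X B) (i2 : Mor Y B) :=
  [/\ p1 \oc i1 = idm X, p2 \oc i2 = idm Y, p1 \oc i2 = 0, p2 \oc i1 = 0
    & i1 \oc p1 + i2 \oc p2 = idm B].

Definition iso_biproduct (M X Y : Obj A) :=
  exists (B : Obj A) (p1 : Mor B X) (p2 : Mor B Y) (i1 : Mor X B) (i2 : Mor Y B),
    is_biproduct p1 p2 i1 i2 /\ isomorphic M B.

Definition is_zero_object (Z : Obj A) :=
  (forall X (f g : Mor Z X), f = g) /\ (forall X (f g : Mor X Z), f = g).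

Definition abelian :=
  (exists Z : Obj A, is_zero_object Z) /\
  [/\ forall X Y : Obj A, exists B (p1 : Mor B X) (p2 : Mor B Y)
          (i1 : Mor X B) (i2 : Mor Y B), is_biproduct p1 p2 i1 i2,
      forall (X Y : Obj A) (f : Mor X Y), exists K (k : Mor K X), is_kernel f k,
      forall (X Y : Obj A) (f : Mor X Y), exists C (c : Mor Y C), is_cokernel f c,
      forall (X Y : Obj A) (m : Mor X Y), monic m ->
          exists Z (f : Mor Y Z), is_kernel f m
    & forall (X Y : Obj A) (e : Mor X Y), epic e ->
          exists Z (f : Mor Z X), is_cokernel f e].

Definition short_exact (F M C : Obj A) (i : Mor F M) (d : Mor M C) :=
  is_kernel d i /\ is_cokernel i d.

Definition self_F_split (strong : bool) (F M : Obj A) (i : Mor F M) :=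
  forall (g : Mor M M) (P : Obj A) (j : Mor P M) (f : Mor P F),
    is_pullback i g j f -> section_s strong j.
Definition dual_self_F_split (strong : bool) (M C : Obj A) (d : Mor M C) :=
  forall (g : Mor M M) (Q : Obj A) (p : Mor M Q) (h : Mor C Q),
    is_pushout d g p h -> retraction_s strong p.

Definition self_Rickart (strong : bool) (M : Obj A) :=
  forall (f : Mor M M) (K : Obj A) (k : Mor K M), is_kernel f k -> section_s strong k.
Definition dual_self_Rickart (strong : bool) (M : Obj A) :=
  forall (f : Mor M M) (C : Obj A) (c : Mor M C), is_cokernel f c -> retraction_s strong c.

End Defs.

Arguments abelian : clear implicits.

(* Main.v *)
Require Import Defs.
From HB Require Import structures.
From mathcomp Require Import all_boot all_algebra.
Local Open Scope ring_scope.

Set Implicit Arguments. Unset Strict Implicit.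
Import GRing.Theory.

Section Helpers.
Variable A : preadditive.
Local Notation "g \oc f" := (cmp g f) (at level 40, left associativity).

Lemma cmp0l (X Y Z : Obj A) (f : Mor X Y) : (0 : Mor Y Z) \oc f = 0.
Proof.
have H := comp_addl (0 : Mor Y Z) 0 f; rewrite addr0 in H.
by apply: (addrI ((0 : Mor Y Z) \oc f)); rewrite addr0 -H.
Qed.

Lemma cmp0r (X Y Z : Obj A) (g : Mor Y Z) : g \oc (0 : Mor X Y) = 0.
Proof.
have H := comp_addr g (0 : Mor X Y) 0; rewrite addr0 in H.
by apply: (addrI (g \oc (0 : Mor X Y))); rewrite addr0 -H.
Qed.

Lemma cmpNl (X Y Z : Obj A) (g : Mor Y Z) (f : Mor X Y) : (- g) \oc f = - (g \oc f).
Proof. by apply: (addrI (g \oc f)); rewrite -comp_addl !subrr cmp0l. Qed.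

Lemma cmpNr (X Y Z : Obj A) (g : Mor Y Z) (f : Mor X Y) : g \oc (- f) = - (g \oc f).
Proof. by apply: (addrI (g \oc f)); rewrite -comp_addr !subrr cmp0r. Qed.

Lemma cmpBl (X Y Z : Obj A) (g g' : Mor Y Z) (f : Mor X Y) :
  (g - g') \oc f = g \oc f - g' \oc f.
Proof. by rewrite comp_addl cmpNl. Qed.

Lemma cmpBr (X Y Z : Obj A) (g : Mor Y Z) (f f' : Mor X Y) :
  g \oc (f - f') = g \oc f - g \oc f'.
Proof. by rewrite comp_addr cmpNr. Qed.

Lemma section_monic (X Y : Obj A) (s : Mor X Y) : is_section s -> Defs.monic s.
Proof.
move=> [t Ht] Z x y Hxy.
by rewrite -(comp_idl x) -(comp_idl y) -Ht -!comp_assoc Hxy.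
Qed.

Lemma retraction_epic (X Y : Obj A) (s : Mor X Y) : is_retraction s -> epic s.
Proof.
move=> [t Ht] Z x y Hxy.
by rewrite -(comp_idr x) -(comp_idr y) -Ht !comp_assoc Hxy.
Qed.

Lemma kernel_monic (X Y K : Obj A) (f : Mor X Y) (k : Mor K X) :
  is_kernel f k -> Defs.monic k.
Proof.
move=> [H0 HU] Z x y Hxy.
have : f \oc (k \oc x) = 0 by rewrite comp_assoc H0 cmp0l.
move=> /HU [u [_ Uu]].
by rewrite -(Uu x erefl) (Uu y (esym Hxy)).
Qed.

Lemma cokernel_epic (X Y K : Obj A) (f : Mor X Y) (c : Mor Y K) :
  is_cokernel f c -> epic c.
Proof.
move=> [H0 HU] Z x y Hxy.
have : (x \oc c) \oc f = 0 by rewrite -comp_assoc H0 cmp0r.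
move=> /HU [u [_ Uu]].
by rewrite -(Uu x erefl) (Uu y (esym Hxy)).
Qed.

Lemma kernel_comp_monic (X Y W K : Obj A) (f : Mor X Y) (m : Mor Y W) (k : Mor K X) :
  is_kernel f k -> Defs.monic m -> is_kernel (m \oc f) k.
Proof.
move=> [H0 HU] Hm; split; first by rewrite -comp_assoc H0 cmp0r.
move=> Z x Hx; apply: HU; apply: Hm; by rewrite cmp0r comp_assoc.
Qed.

Lemma cokernel_comp_epic (X Y W K : Obj A) (f : Mor X Y) (e : Mor W X) (c : Mor Y K) :
  is_cokernel f c -> epic e -> is_cokernel (f \oc e) c.
Proof.
move=> [H0 HU] He; split; first by rewrite comp_assoc H0 cmp0l.
move=> Z x Hx; apply: HU; apply: He; by rewrite cmp0l -comp_assoc.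
Qed.

Variables (F M C : Obj A) (i : Mor F M) (d : Mor M C).
Hypothesis Hses : short_exact i d.

Lemma ses_pullback_kernel (g : Mor M M) P (j : Mor P M) (f : Mor P F) :
  is_pullback i g j f -> is_kernel (d \oc g) j.
Proof.
have [[Hdi HUi] Hc] := Hses.
have Mi := kernel_monic (conj Hdi HUi).
move=> [Hsq HU]; split; first by rewrite -comp_assoc Hsq comp_assoc Hdi cmp0l.
move=> Z x Hx; rewrite -comp_assoc in Hx.
have [y [Hy _]] := HUi _ _ Hx.
have [u [[Hu1 Hu2] Uu]] := HU _ x y (esym Hy).
exists u; split => // u' Hu'; apply: Uu; split => //.
apply: Mi; by rewrite comp_assoc -Hsq -comp_assoc Hu' Hy.
Qed.

Lemma ses_kernel_pullback (g : Mor M M) P (j : Mor P M) :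
  is_kernel (d \oc g) j -> exists f, is_pullback i g j f.
Proof.
have [[Hdi HUi] Hc] := Hses.
have Mi := kernel_monic (conj Hdi HUi).
move=> [H0 HU].
have H1 : d \oc (g \oc j) = 0 by rewrite comp_assoc.
have [f [Hf _]] := HUi _ _ H1.
exists f; split; first by [].
move=> Z x y Hxy.
have Hx : (d \oc g) \oc x = 0 by rewrite -comp_assoc Hxy comp_assoc Hdi cmp0l.
have [u [Hu Uu]] := HU _ _ Hx.
exists u; split.
  split => //; apply: Mi; by rewrite comp_assoc Hf -comp_assoc Hu.
by move=> u' [Hu' _]; apply: Uu.
Qed.

Lemma ses_pushout_cokernel (g : Mor M M) Q (p : Mor M Q) (h : Mor C Q) :
  is_pushout d g p h -> is_cokernel (g \oc i) p.
Proof.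
have [Hk [Hdi HUc]] := Hses.
have Ed := cokernel_epic (conj Hdi HUc).
move=> [Hsq HU]; split; first by rewrite comp_assoc Hsq -comp_assoc Hdi cmp0r.
move=> Z x Hx; rewrite comp_assoc in Hx.
have [y [Hy _]] := HUc _ _ Hx.
have [u [[Hu1 Hu2] Uu]] := HU _ x y (esym Hy).
exists u; split => // u' Hu'; apply: Uu; split => //.
apply: Ed; by rewrite -comp_assoc -Hsq comp_assoc Hu' Hy.
Qed.

Lemma ses_cokernel_pushout (g : Mor M M) Q (p : Mor M Q) :
  is_cokernel (g \oc i) p -> exists h, is_pushout d g p h.
Proof.
have [Hk [Hdi HUc]] := Hses.
have Ed := cokernel_epic (conj Hdi HUc).
move=> [H0 HU].
have H1 : (p \oc g) \oc i = 0 by rewrite -comp_assoc.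
have [h [Hh _]] := HUc _ _ H1.
exists h; split; first by [].
move=> Z x y Hxy.
have Hx : x \oc (g \oc i) = 0 by rewrite comp_assoc Hxy -comp_assoc Hdi cmp0r.
have [u [Hu Uu]] := HU _ _ Hx.
exists u; split.
  split => //; apply: Ed; by rewrite -comp_assoc Hh comp_assoc Hu.
by move=> u' [Hu' _]; apply: Uu.
Qed.

Lemma split_both (t : Mor M F) (s : Mor C M) :
  t \oc i = idm F -> d \oc s = idm C -> t \oc s = 0 ->
  i \oc t + s \oc d = idm M -> iso_biproduct M F C.
Proof.
have [[Hdi _] _] := Hses.
move=> H1 H2 H3 H4.
exists M, t, d, i, s; split; first by split.
exists (idm M), (idm M); by rewrite comp_idl.
Qed.

Lemma split_from_section (t : Mor M F) : t \oc i = idm F -> iso_biproduct M F C.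
Proof.
have [[Hdi HUi] [Hdc HUc]] := Hses.
have Ed := cokernel_epic (conj Hdc HUc).
move=> Ht.
have H0 : (idm M - i \oc t) \oc i = 0
  by rewrite cmpBl comp_idl -comp_assoc Ht comp_idr subrr.
have [s [Hs _]] := HUc _ _ H0.
have Hds : d \oc s = idm C.
  apply: Ed; by rewrite -comp_assoc Hs cmpBr comp_idr comp_assoc Hdi cmp0l subr0 comp_idl.
have Hts : t \oc s = 0.
  apply: Ed; by rewrite -comp_assoc Hs cmpBr comp_idr comp_assoc Ht comp_idl subrr cmp0l.
apply: (split_both Ht Hds Hts); by rewrite Hs addrC subrK.
Qed.

Lemma split_from_retraction (s : Mor C M) : d \oc s = idm C -> iso_biproduct M F C.
Proof.
have [[Hdi HUi] [Hdc HUc]] := Hses.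
have Mi := kernel_monic (conj Hdi HUi).
move=> Hs.
have H0 : d \oc (idm M - s \oc d) = 0
  by rewrite cmpBr comp_idr comp_assoc Hs comp_idl subrr.
have [t [Ht _]] := HUi _ _ H0.
have Hti : t \oc i = idm F.
  apply: Mi; by rewrite comp_assoc Ht cmpBl comp_idl -comp_assoc Hdi cmp0r subr0 comp_idr.
have Hts : t \oc s = 0.
  apply: Mi; by rewrite comp_assoc Ht cmpBl comp_idl -comp_assoc Hs comp_idr subrr cmp0r.
apply: (split_both Hti Hs Hts); by rewrite Ht subrK.
Qed.

End Helpers.

Section Comp.
Variable A : preadditive.
Local Notation "g \oc f" := (cmp g f) (at level 40, left associativity).

Lemma section_comp (st : bool) (X Y Z : Obj A) (a : Mor Y Z) (b : Mor X Y) :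
  section_s st a -> section_s st b -> section_s st (a \oc b).
Proof.
move=> [[ta Ha] Sa] [[tb Hb] Sb]; split.
  exists (tb \oc ta); by rewrite comp_assoc -(comp_assoc tb) Ha comp_idr.
move=> Hst; have [_ Fa] := Sa Hst; have [_ Fb] := Sb Hst; split.
  apply: section_monic; exists (tb \oc ta).
  by rewrite comp_assoc -(comp_assoc tb) Ha comp_idr.
move=> h; have [al Hal] := Fa h; have [be Hbe] := Fb al.
exists be; by rewrite comp_assoc Hal -!comp_assoc Hbe.
Qed.

Lemma retraction_comp (st : bool) (X Y Z : Obj A) (a : Mor Y Z) (b : Mor X Y) :
  retraction_s st a -> retraction_s st b -> retraction_s st (a \oc b).
Proof.
move=> [[ta Ha] Sa] [[tb Hb] Sb]; split.
  exists (tb \oc ta); by rewrite comp_assoc -(comp_assoc a) Hb comp_idr Ha.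
move=> Hst; have [_ Fa] := Sa Hst; have [_ Fb] := Sb Hst; split.
  apply: retraction_epic; exists (tb \oc ta).
  by rewrite comp_assoc -(comp_assoc a) Hb comp_idr Ha.
move=> h; have [be Hbe] := Fb h; have [al Hal] := Fa be.
exists al; by rewrite -comp_assoc Hbe !comp_assoc Hal.
Qed.

Lemma section_cancel (st : bool) (M P K : Obj A) (k : Mor K M) (j : Mor P M) (l : Mor K P) :
  section_s st k -> section_s st j -> j \oc l = k -> section_s st l.
Proof.
move=> [[tk Hk] Sk] [[r Hr] Sj] Hjl; split.
  exists (tk \oc j); by rewrite -comp_assoc Hjl.
have Mj : Defs.monic j by apply: section_monic; exists r.
move=> Hst; have [Mk Fk] := Sk Hst; split.
  move=> Z x y Hxy; apply: Mk; by rewrite -Hjl -!comp_assoc Hxy.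
move=> h; have [al Hal] := Fk (j \oc h \oc r).
exists al; apply: Mj.
rewrite (comp_assoc j l al) Hjl -Hal -Hjl -!comp_assoc.
by rewrite (comp_assoc r j l) Hr comp_idl.
Qed.

Lemma retraction_cancel (st : bool) (M Q K : Obj A) (c : Mor M K) (p : Mor M Q) (q : Mor Q K) :
  retraction_s st c -> retraction_s st p -> q \oc p = c -> retraction_s st q.
Proof.
move=> [[tc Hc] Sc] [[r Hr] Sp] Hqp; split.
  exists (p \oc tc); by rewrite comp_assoc Hqp.
have Ep : epic p by apply: retraction_epic; exists r.
move=> Hst; have [Ec Fc] := Sc Hst; split.
  move=> Z x y Hxy; apply: Ec; by rewrite -Hqp !comp_assoc Hxy.
move=> h; have [be Hbe] := Fc (r \oc h \oc p).
exists be; apply: Ep.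
rewrite -(comp_assoc be q p) Hqp -Hbe -Hqp !comp_assoc.
by rewrite -(comp_assoc q p r) Hr comp_idr.
Qed.

Lemma iso_biproduct_maps (M F C : Obj A) : iso_biproduct M F C ->
  (exists (al : Mor M F) (a : Mor F M), al \oc a = idm F) /\
  (exists (be : Mor C M) (b : Mor M C), b \oc be = idm C).
Proof.
move=> [B [p1 [p2 [i1 [i2 [[H1 H2 _ _ _] [u [v [Hvu Huv]]]]]]]]]; split.
  exists (p1 \oc u), (v \oc i1).
  by rewrite comp_assoc -(comp_assoc p1) Huv comp_idr.
exists (v \oc i2), (p2 \oc u).
by rewrite comp_assoc -(comp_assoc p2) Huv comp_idr.
Qed.

End Comp.

Theorem theorem4p12 (A : preadditive) (HA : abelian A) (strong : bool)
    (F M C : Obj A) (i : Mor F M) (d : Mor M C)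
    (Hses : short_exact i d) (Hfi : fully_invariant i) :
  ( (self_F_split strong i /\
       forall (g : Mor M M) (P : Obj A) (j : Mor P M) (f : Mor P F),
         is_pullback i g j f ->
         forall (K : Obj A) (k : Mor K M), is_kernel g k ->
         forall l : Mor K P, cmp j l = k -> section_s strong l)
    <-> (self_Rickart strong M /\ iso_biproduct M F C) )
  /\
  ( (dual_self_F_split strong d /\
       forall (g : Mor M M) (Q : Obj A) (p : Mor M Q) (h : Mor C Q),
         is_pushout d g p h ->
         forall (K : Obj A) (c : Mor M K), is_cokernel g c ->
         forall q : Mor Q K, cmp q p = c -> retraction_s strong q)
    <-> (dual_self_Rickart strong M /\ iso_biproduct M F C) ).
Proof.
have [_ [_ Hker Hcok _ _]] := HA.
have [[Hdi HUi] [Hdc HUc]] := Hses.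
split; split.
- move=> [HS HL].
  have Hpb1 : is_pullback i (idm M) i (idm F).
    split; first by rewrite comp_idl comp_idr.
    move=> Z x y Hxy; rewrite comp_idl in Hxy.
    exists y; split; first by rewrite comp_idl.
    by move=> u [_ Hu]; rewrite comp_idl in Hu.
  have [[t Ht] _] := HS _ _ _ _ Hpb1.
  split; last exact: (split_from_section Hses Ht).
  move=> f K k Hk.
  have [P [j Hj]] := Hker _ _ (cmp d f).
  have [f' Hpb] := ses_kernel_pullback Hses Hj.
  have Hk0 : cmp (cmp d f) k = 0 by rewrite -comp_assoc Hk.1 cmp0r.
  have [l [Hl _]] := Hj.2 _ _ Hk0.
  have Sl := HL f P j f' Hpb K k Hk l Hl.
  rewrite -Hl; exact: section_comp (HS _ _ _ _ Hpb) Sl.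
- move=> [HR Hiso].
  have [_ [be [b Hbb]]] := iso_biproduct_maps Hiso.
  have Mbe : Defs.monic be by apply: section_monic; exists b.
  have HPB : forall g P (j : Mor P M) f, is_pullback i g j f -> section_s strong j.
    move=> g P j f Hpb; apply: (HR (cmp be (cmp d g))).
    exact: kernel_comp_monic (ses_pullback_kernel Hses Hpb) Mbe.
  split; first exact: HPB.
  move=> g P j f Hpb K k Hk l Hjl.
  exact: section_cancel (HR g K k Hk) (HPB _ _ _ _ Hpb) Hjl.
- move=> [HS HL].
  have Hpo1 : is_pushout d (idm M) d (idm C).
    split; first by rewrite comp_idl comp_idr.
    move=> Z x y Hxy; rewrite comp_idr in Hxy.
    exists y; split; first by rewrite comp_idr.
    by move=> u [_ Hu]; rewrite comp_idr in Hu.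
  have [[s Hs] _] := HS _ _ _ _ Hpo1.
  split; last exact: (split_from_retraction Hses Hs).
  move=> f K c Hc.
  have [Q [p Hp]] := Hcok _ _ (cmp f i).
  have [h Hpo] := ses_cokernel_pushout Hses Hp.
  have Hc0 : cmp c (cmp f i) = 0 by rewrite comp_assoc Hc.1 cmp0l.
  have [q [Hq _]] := Hp.2 _ _ Hc0.
  have Sq := HL f Q p h Hpo K c Hc q Hq.
  rewrite -Hq; exact: retraction_comp Sq (HS _ _ _ _ Hpo).
- move=> [HR Hiso].
  have [[al [a Haa]] _] := iso_biproduct_maps Hiso.
  have Eal : epic al by apply: retraction_epic; exists a.
  have HPO : forall g Q (p : Mor M Q) h, is_pushout d g p h -> retraction_s strong p.
    move=> g Q p h Hpo; apply: (HR (cmp (cmp g i) al)).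
    exact: cokernel_comp_epic (ses_pushout_cokernel Hses Hpo) Eal.
  split; first exact: HPO.
  move=> g Q p h Hpo K c Hc q Hqp.
  exact: retraction_cancel (HR g K c Hc) (HPO _ _ _ _ Hpo) Hqp.
Qed.
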